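(* For every integer $m\geq 0$, $T(\Lambda_{m+1})\subseteq\Lambda_m$, i.e. $T(n)\in\Lambda_m$ for every $n\in\Lambda_{m+1}$.
   Context: $\mathbb{N}=\{1,2,3,\dots\}$, $\mathbb{N}_0=\mathbb{N}\cup\{0\}$. The Collatz map $T:\mathbb{N}\to\mathbb{N}$ is $T(n)=\frac{3n+1}{2}$ if $n$ is odd and $T(n)=\frac{n}{2}$ if $n$ is even. For $0\leq m\leq 3$ let $\Lambda_m=\{2^m\}$, and for $m\geq 4$ let $\Lambda_m$ be the set of all $n\in\mathbb{N}$ that can be written as $n=\frac{2^m}{3^l}-\sum_{k=1}^{l}\frac{2^{b_k}}{3^k}$ for some integers $l,b_1,\dots,b_l\in\mathbb{N}_0$ with $0\leq l\leq m-3$ and $0\leq b_1<b_2<\cdots<b_l\leq m-4$ (for $l=0$ the sum is empty). *)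

(* Defs.v *)
From mathcomp Require Import all_boot all_order all_algebra.
Set Implicit Arguments. Unset Strict Implicit. Unset Printing Implicit Defensive.
Import Order.TTheory GRing.Theory Num.Theory.

(* Collatz map on positive naturals: T n = (3n+1)/2 if n odd, n/2 if n even.
   For odd n, 3n+1 is even, so the nat division is exact. *)
Definition collatzT (n : nat) : nat :=
  if odd n then (3 * n + 1) %/ 2 else n %/ 2.

Local Open Scope ring_scope.

(* The rational value 2^m/3^l - sum_{k=1}^{l} 2^{b_k}/3^k, where the
   sequence b = [:: b_1; ...; b_l] (so b`_i = b_{i+1}) and l = size b. *)
Definition lambda_val (m : nat) (b : seq nat) : rat :=
  (2%:Q ^+ m) / (3%:Q ^+ size b)
  - \sum_(i < size b) (2%:Q ^+ (nth 0%N b i)) / (3%:Q ^+ i.+1).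

Definition inLambda (m : nat) (n : nat) : Prop :=
  if (m <= 3)%N then n = (2 ^ m)%N
  else (0 < n)%N /\
       exists b : seq nat,
         [/\ (size b <= m - 3)%N,
             sorted ltn b,
             all (fun x => x <= m - 4)%N b
           & n%:Q = lambda_val m b].

(* Main.v *)
Require Import Defs.
From mathcomp Require Import all_boot all_order all_algebra ring zify.
Set Implicit Arguments. Unset Strict Implicit. Unset Printing Implicit Defensive.
Import Order.TTheory GRing.Theory Num.Theory.
Section Helpers.
Local Open Scope ring_scope.

Lemma lam_nil m : lambda_val m [::] = 2%:Q ^+ m.
Proof. by rewrite /lambda_val big_ord0 /= expr0 divr1 subr0. Qed.

Lemma three_neq0 : 3%:Q != 0. Proof. by []. Qed.

Lemma lam_cons m x b : lambda_val m (x :: b) = (lambda_val m b - 2%:Q ^+ x) / 3%:Q.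
Proof.
rewrite /lambda_val /= big_ord_recl /=.
rewrite (eq_bigr (fun i : 'I_ _ => (2%:Q ^+ nth 0%N b i / 3%:Q ^+ i.+1) / 3%:Q)); last first.
  move=> i _; rewrite add0n /bump leq0n add1n [3%:Q ^+ i.+2]exprS; field.
  by rewrite expf_neq0 // three_neq0.
rewrite -mulr_suml.
set S := \sum_(i < _) _.
rewrite exprS expr1; field.
by rewrite expf_neq0 // three_neq0.
Qed.

Lemma lam_map m b : lambda_val m.+1 (map S b) = 2%:Q * lambda_val m b.
Proof.
elim: b => [|x b IH]; first by rewrite !lam_nil exprS.
rewrite /= !lam_cons IH exprS; field; exact: three_neq0.
Qed.

Fixpoint Nz (m : nat) (b : seq nat) : int :=
  match b with
  | [::] => ((2 ^ m)%N)%:Z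
  | x :: b' => Nz m b' - ((2 ^ x * 3 ^ size b')%N)%:Z
  end.

Lemma two_Q : 2%:Q = 2%:R. Proof. by []. Qed.
Lemma three_Q : 3%:Q = 3%:R. Proof. by []. Qed.

Lemma NzE m b : (Nz m b)%:~R = 3%:Q ^+ size b * lambda_val m b.
Proof.
elim: b => [|x b IH] /=.
  by rewrite lam_nil expr0 mul1r two_Q -pmulrn natrX.
rewrite lam_cons rmorphB /= IH -pmulrn natrM !natrX -two_Q -three_Q exprS.
field; exact: three_neq0.
Qed.

Lemma Nz_even m b : (0 < m)%N -> all (fun y => 0 < y)%N b -> (2 %| Nz m b)%Z.
Proof.
move=> m0; elim: b => [|x b IH] /=.
  by rewrite dvdzE /= -(prednK m0) expnS dvdn_mulr.
case/andP=> x0 /IH h; apply: rpredB => //.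
by rewrite dvdzE /= -(prednK x0) expnS -mulnA dvdn_mulr.
Qed.

Lemma Nz_odd m b : (0 < m)%N -> all (fun y => 0 < y)%N b -> ~~ (2 %| Nz m (0%N :: b))%Z.
Proof.
move=> m0 hb /=; rewrite rpredBl ?Nz_even // dvdzE /= mul1n dvdn2 oddX orbT //.
Qed.

Lemma natQ (n : nat) : n%:Q = n%:R.
Proof. by rewrite -pmulrn. Qed.

Lemma par (n m : nat) b : n%:Q = lambda_val m b -> (2 %| Nz m b)%Z = ~~ odd n.
Proof.
move=> H.
have E : ((n * 3 ^ size b)%N)%:Z = Nz m b.
  apply: (@intr_inj rat); rewrite NzE -H -!pmulrn natrM natrX mulrC.
  by [].
by rewrite -E dvdzE /= dvdn2 oddM oddX /= orbT andbT.
Qed.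

Lemma size_sorted K s : sorted ltn s -> all (fun x => x <= K)%N s -> (size s <= K.+1)%N.
Proof.
move=> hs ha; rewrite -(size_iota 0 K.+1); apply: uniq_leq_size.
  exact: (sorted_uniq ltn_trans ltnn hs).
by move=> x /(allP ha); rewrite mem_iota.
Qed.

Lemma mapSpred (b : seq nat) : all (fun y => 0 < y)%N b -> map S (map predn b) = b.
Proof.
move=> hb; rewrite -map_comp; apply: map_id_in => y /(allP hb) /= y0.
by rewrite prednK.
Qed.

Lemma shift_props m (b : seq nat) : all (fun y => 0 < y)%N b -> sorted ltn b ->
  all (fun x => x <= m.+1 - 4)%N b ->
  sorted ltn (map predn b) /\ all (fun x => x <= m - 4)%N (map predn b).
Proof.
move=> hp hs ha; rewrite -(mapSpred hp) sorted_map in hs; split.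
  by apply: sub_sorted hs.
rewrite all_map; apply/allP => y /(allP ha) /=; lia.
Qed.

Lemma key_even m (bb : seq nat) n : (3 < m)%N -> all (fun y => 0 < y)%N bb -> sorted ltn bb ->
  all (fun x => x <= m.+1 - 4)%N bb -> (0 < n)%N -> n%:Q = lambda_val m.+1 bb ->
  inLambda m (collatzT n).
Proof.
move=> hm hp hs ha n0 hn.
have [hs' ha'] := shift_props hp hs ha.
have ev : ~~ odd n by rewrite -(par hn) Nz_even.
rewrite /inLambda leqNgt hm /= /collatzT (negbTE ev).
have Ek : (2 * (n %/ 2))%N = n by rewrite mulnC divnK // dvdn2.
split; first lia.
exists (map predn bb); split => //.
  have := size_sorted hs' ha'; rewrite size_map; lia.
apply: (@mulfI _ 2%:Q) => //.
set k := (n %/ 2)%N in Ek *.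
rewrite -lam_map mapSpred // -hn !natQ -Ek natrM; by [].
Qed.

Lemma key_odd m (b : seq nat) n : (3 < m)%N -> all (fun y => 0 < y)%N b -> sorted ltn b ->
  all (fun x => x <= m.+1 - 4)%N b -> ((size b).+1 <= m.+1 - 3)%N -> (0 < n)%N ->
  n%:Q = lambda_val m.+1 (0%N :: b) -> inLambda m (collatzT n).
Proof.
move=> hm hp hs ha hsz n0 hn.
have [hs' ha'] := shift_props hp hs ha.
have od : odd n by have := Nz_odd (ltn0Sn m) hp; rewrite (par hn) negbK.
rewrite /inLambda leqNgt hm /= /collatzT od.
have Ek : (2 * ((3 * n + 1) %/ 2))%N = (3 * n + 1)%N.
  by rewrite mulnC divnK // dvdn2 oddD oddM od.
split; first lia.
exists (map predn b); split => //.
  rewrite size_map; lia.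
apply: (@mulfI _ 2%:Q) => //.
set k := ((3 * n + 1) %/ 2)%N in Ek *.
have : (2 * k)%:R = (3 * n + 1)%:R :> rat by rewrite Ek.
rewrite natrM natrD natrM => E'.
rewrite -lam_map mapSpred //.
have L : lambda_val m.+1 b = 3%:Q * n%:Q + 1.
  by rewrite hn lam_cons expr0; field; exact three_neq0.
rewrite L !natQ; exact: E'.
Qed.
End Helpers.
Theorem mainTheorem1 :
  forall (m n : nat), inLambda m.+1 n -> inLambda m (collatzT n).
Proof.
move=> m n.
case: (ltnP m 3) => hm.
  rewrite /inLambda hm (ltnW hm) => ->.
  by rewrite /collatzT expnS oddM /= mulKn.
move: hm; rewrite leq_eqVlt => /orP [/eqP <-|hm].
  rewrite /inLambda /= => -[n0 [b [hs hsort hall hn]]].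
  case: b hs hsort hall hn => [|x [|y b]] //= _ _.
    move=> _; rewrite lam_nil natQ => /eqP.
    have -> : (2%:Q ^+ 4 = 16%:R)%R by [].
    by rewrite eqr_nat => /eqP ->.
  rewrite andbT leqn0 => /eqP ->.
  rewrite lam_cons lam_nil natQ => /eqP.
  have -> : ((2%:Q ^+ 4 - 2%:Q ^+ 0) / 3%:Q = 5%:R)%R by [].
  by rewrite eqr_nat => /eqP ->.
have h1 : (m.+1 <= 3)%N = false by lia.
have h2 : (m <= 3)%N = false by lia.
rewrite {1}/inLambda h1 => -[n0 [b [hs hsort hall hn]]].
case: b hs hsort hall hn => [|x b] hs hsort hall hn.
  move: hn; rewrite lam_nil natQ.
  have -> : (2%:Q ^+ m.+1 = (2 ^ m.+1)%N%:R)%R by rewrite natrX.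
  move=> /eqP; rewrite eqr_nat => /eqP ->.
  rewrite /inLambda h2 /collatzT expnS oddM /= mulKn //.
  split; first by rewrite expn_gt0.
  exists [::]; split => //.
  by rewrite lam_nil natQ natrX.
have hp : all (fun y => 0 < y)%N b.
  apply: sub_all (order_path_min ltn_trans hsort) => y; exact: leq_ltn_trans (leq0n x).
case: x hs hsort hall hn => [|x] hs hsort hall hn.
  apply: (key_odd hm hp (path_sorted hsort) _ hs n0 hn).
  by case/andP: hall.
by apply: (key_even hm _ hsort hall n0 hn) => /=; rewrite hp.
Qed.
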